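(* Let $\Phi=\forall u_1\ldots\forall u_n\exists e_1(D_1)\ldots\exists e_m(D_m).\varphi$ be a DQBF with prefix $\mathcal{Q}$, let $A$ be a set of arbiter variables, let $\psi$ be a CNF with $\mathit{var}(\psi)\subseteq U\cup E\cup A$, let $\Psi=\mathcal{Q}\exists A(\emptyset).\psi$, let $\neg p\vee\ell$ be a forcing clause in $\psi$, and let $\Psi'=\mathcal{Q}\exists A(\emptyset).\psi\wedge(\neg p\vee\ell)$. Then $F$ is a model of $\Psi$ if and only if $F$ is a model of $\Psi'$.
   Context: For a set $V$ of variables, $[V]$ is the set of assignments $V\to\{\textsc{true},\textsc{false}\}$; assignments are identified with terms of the literals they make true, $\neg\sigma$ is the clause of the negations of these literals, and $\sigma|_W$ denotes restriction to (the part of the domain lying in) $W$. A DQBF is $\forall u_1\ldots\forall u_n\exists e_1(D_1)\ldots\exists e_m(D_m).\varphi$ with pairwise distinct variables, $U=\{u_i\}$, $E=\{e_j\}$, dependency sets $D(e_j)=D_j\subseteq U$, and $\varphi$ a CNF over $U\cup E$; a model is a family $F=(F_e)_{e}$ with $F_e:[D(e)]\to\{\textsc{true},\textsc{false}\}$ such that for every $\sigma\in[U]$, $\sigma\cup F(\sigma)$ satisfies the matrix, where $F(\sigma)$ assigns each existential $e$ the value $F_e(\sigma|_{D(e)})$. Arbiter variables are fresh variables $e^\sigma$ for $e\in E$, $\sigma\in[D(e)]$. For a set $A$ of them and a CNF $\psi$, $\mathcal{Q}\exists A(\emptyset).\psi$ is the DQBF whose prefix is that of $\Phi$ extended by every variable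 of $A$ as an existential variable with empty dependency set, and whose matrix is $\psi$. Forcing: let $\ell$ be a literal on a variable in $E$, $\psi$ a formula with $\mathit{var}(\psi)\subseteq U\cup E\cup A$, and $\sigma$ a partial assignment to $U\cup A$; $\ell$ is forced by $\sigma$ in $\psi$ if $\psi\wedge\sigma\wedge\neg\ell$ is unsatisfiable, and in that case $\neg(\sigma|_{D(\mathit{var}(\ell))\cup A})\vee\ell$ is called a forcing clause in $\psi$. *)

(* Defs.v *)
From mathcomp Require Import all_boot.
Set Implicit Arguments. Unset Strict Implicit. Unset Printing Implicit Defensive.

(* Variables of the extended DQBF: universals u_i (i : 'I_n), existentials
   e_j (j : 'I_m), and arbiter variables e_j^sigma, where an assignment
   sigma in [D(e_j)] is identified with the set S of universals of D(e_j)
   it maps to true (S \subset D j). *)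
Definition var (n m : nat) : finType := (('I_n + 'I_m) + ('I_m * {set 'I_n}))%type.

Definition uvar {n m} (i : 'I_n) : var n m := inl (inl i).
Definition evar {n m} (j : 'I_m) : var n m := inl (inr j).
Definition avar {n m} (a : 'I_m * {set 'I_n}) : var n m := inr a.

Definition lit n m := (var n m * bool)%type.
Definition clause n m := seq (lit n m).
Definition cnf n m := seq (clause n m).

Definition lit_true n m (al : var n m -> bool) (l : lit n m) : bool := al l.1 == l.2.
Definition clause_sat n m (al : var n m -> bool) (C : clause n m) : bool :=
  has (lit_true al) C.
Definition cnf_sat n m (al : var n m -> bool) (psi : cnf n m) : bool :=
  all (clause_sat al) psi.

Definition neg_lit n m (l : lit n m) : lit n m := (l.1, ~~ l.2).

Definition arbiter_set n m (D : 'I_m -> {set 'I_n}) (A : {set 'I_m * {set 'I_n}}) :=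
  forall a, a \in A -> a.2 \subset D a.1.

Definition in_UEA n m (A : {set 'I_m * {set 'I_n}}) (v : var n m) : bool :=
  match v with inl _ => true | inr a => a \in A end.
Definition in_UA n m (A : {set 'I_m * {set 'I_n}}) (v : var n m) : bool :=
  match v with inl (inl _) => true | inl (inr _) => false | inr a => a \in A end.
Definition is_evar n m (v : var n m) : bool :=
  match v with inl (inr _) => true | _ => false end.

Definition vars_within n m (A : {set 'I_m * {set 'I_n}}) (psi : cnf n m) :=
  forall C l, C \in psi -> l \in C -> in_UEA A l.1.

Definition pasg n m := var n m -> option bool.

Definition dom_in n m (P : pred (var n m)) (s : pasg n m) := forall v, s v <> None -> P v.

Definition restrict n m (s : pasg n m) (W : pred (var n m)) : pasg n m :=
  fun v => if W v then s v else None.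

Definition neg_term n m (s : pasg n m) : clause n m :=
  pmap (fun v => omap (fun b => (v, ~~ b)) (s v)) (enum (var n m)).

(* D(var l) \cup A, for l a literal on an existential variable *)
Definition dep_or_arb n m (D : 'I_m -> {set 'I_n}) (A : {set 'I_m * {set 'I_n}})
  (x : var n m) : pred (var n m) :=
  fun v => match v with
           | inl (inl i) => match x with inl (inr j) => i \in D j | _ => false end
           | inl (inr _) => false
           | inr a => a \in A
           end.

Definition forced n m (psi : cnf n m) (s : pasg n m) (l : lit n m) : Prop :=
  ~ exists al : var n m -> bool,
      [/\ cnf_sat al psi, (forall v b, s v = Some b -> al v = b) & lit_true al (neg_lit l)].

Definition forcing_clause n m (D : 'I_m -> {set 'I_n}) (A : {set 'I_m * {set 'I_n}})
  (psi : cnf n m) (p : pasg n m) (l : lit n m) : Prop :=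
  is_evar l.1 /\
  exists s : pasg n m, [/\ dom_in (in_UA A) s, forced psi s l &
                           p = restrict s (dep_or_arb D A l.1)].

(* Candidate model of Q exists A(emptyset). psi: F_e : [D(e)] -> bool for each
   existential (with [D(e)] identified with subsets of D(e)), and a constant
   for every arbiter variable (empty dependency set). *)
Record strategy n m := Strategy {
  FE : 'I_m -> {set 'I_n} -> bool;
  FA : 'I_m * {set 'I_n} -> bool }.

Definition extend n m (D : 'I_m -> {set 'I_n}) (F : strategy n m)
  (s : {ffun 'I_n -> bool}) : var n m -> bool :=
  fun v => match v with
           | inl (inl i) => s i
           | inl (inr j) => FE F j [set i in D j | s i]
           | inr a => FA F a
           end.

Definition is_model n m (D : 'I_m -> {set 'I_n}) (F : strategy n m) (psi : cnf n m) : Prop :=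
  forall s : {ffun 'I_n -> bool}, cnf_sat (extend D F s) psi.

(* Main.v *)
Require Import Defs.
From mathcomp Require Import all_boot.

Theorem lemma9 (n m : nat) (D : 'I_m -> {set 'I_n})
  (A : {set 'I_m * {set 'I_n}}) (psi : cnf n m) (p : pasg n m) (l : lit n m)
  (F : strategy n m) :
  arbiter_set D A ->
  vars_within A psi ->
  forcing_clause D A psi p l ->
  is_model D F psi <-> is_model D F (rcons psi (rcons (neg_term p) l)).
Proof.
move=> _ _ [Hev [s' [Hdom Hforced Hp]]]; split; last first.
  by move=> H s; move: (H s); rewrite /cnf_sat all_rcons => /andP[].
move=> H s; have Hsat := H s; rewrite /cnf_sat in Hsat; rewrite /cnf_sat all_rcons Hsat andbT /clause_sat has_rcons.
case Hl: (lit_true _ l) => //=.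
apply/negPn/negP => /negP Hn.
have agree : forall v b, p v = Some b -> extend D F s v = b.
  move=> v b Hv.
  have Hin : (v, ~~ b) \in neg_term p.
    rewrite /neg_term mem_pmap.
    have -> : Some (v, ~~ b) = (fun v => omap (fun b => (v, ~~ b)) (p v)) v by rewrite Hv.
    by apply: map_f; rewrite mem_enum.
  apply/eqP; apply/negPn/negP => Hne; apply: Hn; apply/hasP; exists (v, ~~ b) => //.
  by rewrite /lit_true /=; move: Hne; clear; case: (extend D F s v); case: b.
pose s2 : {ffun 'I_n -> bool} :=
  [ffun i => if s' (uvar i) is Some b then b else s i].
apply: Hforced; exists (extend D F s2); split.
- exact: H.
- case=> [[i|j]|a] b /= Hs.
  + by rewrite /s2 ffunE /uvar Hs.
  + by have := Hdom (inl (inr j)) ltac:(by rewrite Hs).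
  + have Ha := Hdom (inr a) ltac:(by rewrite Hs).
    have : p (inr a) = Some b by move: Ha => /= Ha; rewrite Hp /restrict /= Ha.
    by move/agree.
- case: l Hev Hl Hp => [[[i|j]|a] c] //= _ Hl Hp.
  move: Hl; rewrite /lit_true /=.
  have -> : [set i in D j | s2 i] = [set i in D j | s i].
    apply/setP => i; rewrite !inE /s2 ffunE.
    case Di: (i \in D j) => //=.
    case Hs: (s' (uvar i)) => [b|] //.
    have : p (uvar i) = Some b by rewrite Hp /restrict /= Di.
    by move/agree.
  by case: (FE F j _); case: c.
Qed.
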